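(* Let $q$ be a prime power, let $A(X) \in \mathbb{F}_q[X]$, and let $$A(X) = \sum_{i \geq 0} A_i(X) \Lambda^i(X), \qquad \deg(A_i) < q \text{ for all } i,$$ be the base-$\Lambda(X)$ expansion of $A(X)$, where $\Lambda(X) = X^q - X$. Then $$\mathsf{pdeg}(A) = \max_{i \geq 0} \deg(A_i).$$
   Context: For $A(X) \in \mathbb{F}_q[X]$, $A^{[\ell]}(X)$ denotes the $\ell$-th Hasse derivative: the coefficient of $Z^\ell$ in the expansion of $A(X+Z)$ as a polynomial in $Z$. The $\ell$-th pseudoderivative is $A_{\langle \ell \rangle}(X) = A^{[\ell]}(X) \bmod \Lambda(X)$ (the unique polynomial of degree at most $q-1$ agreeing with $A^{[\ell]}$ on all of $\mathbb{F}_q$). The pseudodegree is $\mathsf{pdeg}(A) = \max_{\ell \geq 0} \deg(A_{\langle \ell \rangle})$. *)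

(* Defs.v *)
From HB Require Import structures.
From mathcomp Require Import all_boot all_order all_algebra.
Set Implicit Arguments. Unset Strict Implicit. Unset Printing Implicit Defensive.
Import Order.TTheory GRing.Theory Num.Theory.
Local Open Scope ring_scope.

(* F is a finite field, q = #|F| (a prime power). *)
Definition Lam (F : finFieldType) : {poly F} := 'X^#|F| - 'X.

(* l-th Hasse derivative: mathcomp's nderivn, p^`N(l), whose i-th coefficient
   is p_(l+i) * C(l+i, l), i.e. the coefficient of Z^l in p(X+Z). *)
Definition hasse (F : finFieldType) (l : nat) (A : {poly F}) : {poly F} := A^`N(l).

Definition pseudoderiv (F : finFieldType) (l : nat) (A : {poly F}) : {poly F} :=
  hasse l A %% Lam F.

Definition degz (R : nzRingType) (p : {poly R}) : int := (size p)%:Z - 1.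

Definition is_pdeg (F : finFieldType) (A : {poly F}) (d : int) : Prop :=
  (forall l : nat, degz (pseudoderiv l A) <= d) /\
  (exists l : nat, degz (pseudoderiv l A) = d).

(* Main.v *)
Require Import Defs.
From mathcomp Require Import all_boot all_order all_algebra all_field ring zify.
Import Order.TTheory GRing.Theory Num.Theory.
Local Open Scope ring_scope.

Section S.
Variable F : finFieldType.
Implicit Types p q : {poly F}.

Lemma nderivnMX (r : {poly F}) n : (r * 'X)^`N(n.+1) = r^`N(n) + r^`N(n.+1) * 'X.
Proof. by have := nderivnMXaddC n r 0; rewrite polyC0 addr0. Qed.

Lemma nderivnM p q l :
  (p * q)^`N(l) = \sum_(k < l.+1) p^`N(k) * q^`N(l - k).
Proof.
elim/poly_ind: p l => [|p c IH] l.
  by rewrite mul0r raddf0 big1 // => k _; rewrite raddf0 mul0r.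
rewrite mulrDl mulrAC nderivnD mul_polyC nderivnZ.
case: l => [|n].
  by rewrite big_ord_recl big_ord0 !nderivn0 addr0 mulrDl mulrAC mul_polyC.
rewrite nderivnMX !IH.
have E1 : \sum_(k < n.+2) (p * 'X + c%:P)^`N(k) * q^`N(n.+1 - k) =
  (p * 'X + c%:P) * q^`N(n.+1) +
  \sum_(k < n.+1) (p^`N(k) * q^`N(n - k) + (p^`N(k.+1) * q^`N(n - k)) * 'X).
  rewrite big_ord_recl nderivn0 subn0; congr (_ + _); apply: eq_bigr => k _.
  by rewrite /bump /= nderivnMXaddC subSS mulrDl mulrAC.
have E2 : \sum_(k < n.+2) p^`N(k) * q^`N(n.+1 - k) =
  p * q^`N(n.+1) + \sum_(k < n.+1) p^`N(k.+1) * q^`N(n - k).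
  rewrite big_ord_recl nderivn0 subn0; congr (_ + _); by apply: eq_bigr => k _.
rewrite E1 E2 big_split /= -mulr_suml -mul_polyC.
ring.
Qed.

Lemma binq j : (0 < j < #|F|)%N -> ('C(#|F|, j))%:R = 0 :> F.
Proof.
move=> /andP[j0 jq].
pose g : {poly F} := \poly_(i < #|F|.+1) ('C(#|F|, i))%:R - 1 - 'X^#|F|.
have gE h : g.[h] = 0.
  rewrite /g !(hornerD, hornerN, horner_poly, hornerC, hornerXn) expf_card.
  have := exprDn 1 h #|F|; rewrite expf_card => E.
  have -> : \sum_(i < #|F|.+1) ('C(#|F|, i))%:R * h ^+ i = 1 + h.
    by rewrite E; apply: eq_bigr => i _; rewrite expr1n mul1r mulr_natl.
  by ring.
have n0 : (0 < #|F|)%N by apply: ltn_trans jq.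
have g0 : g = 0.
  apply/eqP; apply: contraT => nz.
  have := max_poly_roots nz (rs := enum F).
  rewrite enum_uniq -cardE.
  have -> : all (root g) (enum F) by apply/allP => x _; rewrite /root gE.
  move=> /(_ isT isT); rewrite ltnNge => /negP H; exfalso; apply: H.
  apply/leq_sizeP => k kn.
  rewrite /g !(coefB, coef_poly, coefC, coefXn).
  rewrite ltnS; case: (ltngtP k #|F|) kn => // [kn|->] _.
    by rewrite gtn_eqF ?(leq_trans n0 (ltnW kn)) // subr0 subrr.
  by rewrite binn gtn_eqF // subr0 subrr.
have := congr1 (fun p => p`_j) g0.
rewrite /g !(coefB, coef_poly, coefC, coefXn) ltnS (ltnW jq).
by rewrite gtn_eqF // ltn_eqF // !subr0.
Qed.

Lemma q_gt1 : (1 < #|F|)%N.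
Proof. exact: finNzRing_gt1. Qed.

Lemma size_Lam : size (Lam F) = #|F|.+1.
Proof.
by rewrite /Lam size_polyDl ?size_polyXn // size_polyN size_polyX ltnS q_gt1.
Qed.

Lemma coef_Lam k : (Lam F)`_k = (k == #|F|)%:R - (k == 1)%:R.
Proof. by rewrite /Lam coefB coefXn coefX. Qed.

Lemma LamN k : (0 < k)%N -> (Lam F)^`N(k) = ((Lam F)`_k)%:P.
Proof.
move=> k0; apply/polyP => i; rewrite coef_nderivn coefC !coef_Lam.
case: i => [|i]; first by rewrite addn0 binn mulr1n.
have -> : (k + i.+1 == 1)%N = false by rewrite addnS eqSS addn_eq0 (negbTE (lt0n_neq0 k0)).
rewrite subr0 /=; case: eqP => [E|_]; last by rewrite mul0rn.
by rewrite E -[true%:R]/(1 : F) binq // k0 /= -E -addSnnS leq_addr.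
Qed.

Lemma modp_C c : c%:P %% Lam F = c%:P.
Proof. by rewrite modp_small // size_Lam ltnS (leq_trans (size_polyC_leq1 c)) // ltnW // q_gt1. Qed.

Lemma modsum I (r : seq I) (P : pred I) (f : I -> {poly F}) d :
  (\sum_(i <- r | P i) f i) %% d = \sum_(i <- r | P i) (f i %% d).
Proof.
elim: r => [|x r IH]; rewrite ?big_nil ?big_cons ?mod0p //.
by case: (P x); rewrite ?modpD IH.
Qed.

Lemma modM (a b d : {poly F}) : (a * b) %% d = ((a %% d) * (b %% d)) %% d.
Proof. by rewrite (modp_mul (a %% d) b d) (mulrC (a %% d) b) (modp_mul b a d) mulrC. Qed.

Lemma LamN' k : (Lam F)^`N(k) %% Lam F = ((Lam F)`_k)%:P.
Proof.
case: k => [|k]; last by rewrite LamN // modp_C.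
by rewrite nderivn0 modpp coef_Lam eq_sym (gtn_eqF (ltnW q_gt1)) subrr polyC0.
Qed.

Lemma LamPowN i k : ((Lam F)^+i)^`N(k) %% Lam F = (((Lam F)^+i)`_k)%:P.
Proof.
elim: i k => [|i IH] k.
  by rewrite expr0 -polyC1 nderivnC coefC; case: eqP => _; rewrite ?mod0p ?modp_C.
rewrite exprS nderivnM coefM modsum raddf_sum; apply: eq_bigr => j _.
by rewrite modM LamN' IH -polyCM modp_C.
Qed.

Lemma size_nderivn (p : {poly F}) n : (size (p^`N(n)) <= size p)%N.
Proof. by rewrite /nderivn (leq_trans (size_poly _ _)) // leq_subr. Qed.

Lemma maxE (s : seq {poly F}) :
  \big[Num.max/(-1)%R]_(p <- s) degz p = (\max_(p <- s) size p)%N%:Z - 1.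
Proof.
elim: s => [|p s IH]; rewrite ?big_nil ?big_cons //= IH /degz.
case: (leqP (size p) (\max_(p <- s) size p)%N) => h.
  by rewrite max_r // lerD2r lez_nat.
by rewrite max_l // lerD2r lez_nat ltnW.
Qed.
End S.
Arguments nderivnMX {F}.
Arguments nderivnM {F}.
Arguments binq {F}.
Arguments q_gt1 {F}.
Arguments size_Lam {F}.
Arguments coef_Lam {F}.
Arguments LamN {F}.
Arguments modp_C {F}.
Arguments modsum {F}.
Arguments modM {F}.
Arguments LamN' {F}.
Arguments LamPowN {F}.
Arguments size_nderivn {F}.
Arguments maxE {F}.

Theorem lemma5p3 (F : finFieldType) (A : {poly F}) (s : seq {poly F}) :
  (forall i : nat, (size (s`_i)%R <= #|F|)%N) ->
  A = \sum_(i < size s) s`_i * (Lam F) ^+ i ->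
  is_pdeg A (\big[Num.max/(-1)%R]_(p <- s) degz p).
Proof.
move=> hs ->; rewrite maxE.
set D := (\max_(p <- s) size p)%N.
have sD i : (size (s`_i)%R <= D)%N.
  case: (ltnP i (size s)) => [lt|ge]; last by rewrite nth_default // size_poly0.
  by apply: leq_bigmax_seq => //; rewrite mem_nth.
have Dq : (D <= #|F|)%N.
  by apply/bigmax_leqP_seq => p ps _; rewrite -(nth_index 0 ps); exact: hs.
pose B l := \sum_(i < size s) \sum_(k < l.+1)
   (((Lam F)^+i)`_k) *: (s`_i)^`N(l - k).
have pdE l : pseudoderiv l (\sum_(i < size s) s`_i * (Lam F)^+i) = B l.
  rewrite /pseudoderiv /hasse raddf_sum modsum; apply: eq_bigr => i _.
  change (nderivn l (s`_i * Lam F ^+ i) %% Lam F = \sum_(k < l.+1) (Lam F ^+ i)`_k *: (s`_i)^`N(l - k)).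
  rewrite mulrC nderivnM modsum; apply: eq_bigr => k _.
  have sm (t : {poly F}) : (size t <= #|F|)%N -> t %% Lam F = t.
    by move=> st; rewrite modp_small // size_Lam ltnS.
  have st : (size ((s`_i)^`N(l - k))%R <= #|F|)%N.
    by apply: leq_trans (size_nderivn _ _) _; apply: hs.
  rewrite modM LamPowN (sm _ st) mul_polyC sm //.
  exact: leq_trans (size_scale_leq _ _) st.
have szB l : (size (B l) <= D)%N.
  rewrite /B; apply: (big_ind (fun p : {poly F} => size p <= D)%N).
  - by rewrite size_poly0.
  - by move=> x y hx hy; rewrite (leq_trans (size_polyD _ _)) // geq_max hx hy.
  move=> i _; apply: (big_ind (fun p : {poly F} => size p <= D)%N).
  - by rewrite size_poly0.
  - by move=> x y hx hy; rewrite (leq_trans (size_polyD _ _)) // geq_max hx hy.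
  move=> k _; apply: leq_trans (size_scale_leq _ _) _.
  exact: leq_trans (size_nderivn _ _) (sD i).
split.
  by move=> l; rewrite pdE /degz lerD2r lez_nat szB.
suff [l hl] : exists l, size (B l) = D.
  by exists l; rewrite pdE /degz hl.
case D0 : D => [|d].
  by exists 0%N; apply/eqP; rewrite -leqn0 -D0 szB.
pose c i := (s`_i)`_d.
pose P := \poly_(i < size s) c i.
have Pnz : P != 0.
  case: (boolP (has (fun p : {poly F} => size p == D) s)) => [/hasP [p ps /eqP sp] | /hasPn hn].
    apply/eqP => /(congr1 (fun r : {poly F} => r`_(index p s))).
    rewrite coef_poly index_mem ps coef0 /c nth_index //.
    move/eqP; rewrite -[d]/(d.+1.-1) -D0 -sp -lead_coefE lead_coef_eq0.
    by rewrite -size_poly_eq0 sp D0.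
  exfalso.
  have : (D <= d)%N.
    apply/bigmax_leqP_seq => p ps _; have := hn p ps.
    have := sD (index p s); rewrite nth_index // D0 leq_eqVlt => /orP [/eqP -> |].
      by rewrite eqxx.
    by [].
  by rewrite D0 ltnn.
set Q := P \Po Lam F.
have Qnz : Q != 0.
  by rewrite comp_poly_eq0 // size_Lam ltnS ltnW // q_gt1.
exists (size Q).-1.
have QE : Q`_(size Q).-1 = \sum_(i < size s) c i * ((Lam F)^+i)`_(size Q).-1.
  rewrite coef_comp_poly (big_ord_widen (size s) (fun i => P`_i * ((Lam F)^+i)`_(size Q).-1) (size_poly _ _)).
  rewrite big_mkcond /=; apply: eq_bigr => i _.
  case: ifP => [_|/negbT]; first by rewrite coef_poly ltn_ord.
  by rewrite -leqNgt => /(nth_default 0); rewrite coef_poly ltn_ord => ->; rewrite mul0r.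
have Bd : (B (size Q).-1)`_d = lead_coef Q.
  rewrite lead_coefE QE /B coef_sum; apply: eq_bigr => i _.
  rewrite coef_sum big_ord_recr /= subnn nderivn0 big1 ?add0r.
    by rewrite coefZ mulrC.
  move=> k _; rewrite coefZ coef_nderivn.
  have -> : (s`_i)`_((size Q).-1 - k + d) = 0.
    apply: nth_default; apply: leq_trans (sD i) _; rewrite D0.
    have := ltn_ord k; move: (nat_of_ord k) => a; move: (size Q).-1 => b; lia.
  by rewrite mul0rn mulr0.
apply/eqP; rewrite -D0 eqn_leq szB /= D0 ltnNge; apply/negP => H.
move: (nth_default 0 H); rewrite -/(coefp _ _) /= Bd => /eqP.
by rewrite lead_coef_eq0 (negbTE Qnz).
Qed.
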